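(* (Repeated insertion model.) For each $1\le x\le n$ let $\theta(\cdot,x)$ be a probability vector on $\{1,\ldots,x\}$, and define the distribution $p$ on $S_n$ by \[ p(\pi)=\prod_{x=1}^n\theta(r_x(\pi),x),\qquad r_x(\pi)=\bigl|\{j\le x:\ \pi^{-1}(j)\le\pi^{-1}(x)\}\bigr| \] (the position of $x$ in the relative order of $1,\ldots,x$ in the sequence $(\pi(1),\ldots,\pi(n))$). Then $p$ is bi-decomposable; in particular $p(\pi)=\prod_{k=0}^{n-1}\Lambda(\pi(k+1),\pi\{1:k\})$ with $\Lambda(x,C)=\theta(|C\cap\{1,\ldots,x\}|+1,x)$.
   Context: $S_n$ is the group of permutations of $\{1,\ldots,n\}$; $\pi\{1:k\}=\{\pi(1),\ldots,\pi(k)\}$. A distribution $p$ on $S_n$ is $L$-decomposable if there exist a nonnegative function $\Lambda$ on pairs $(x,C)$ with $C\subset\{1,\ldots,n\}$, $x\notin C$, and a constant $c$ with $p(\pi)=c\prod_{k=0}^{n-1}\Lambda(\pi(k+1),\pi\{1:k\})$ for all $\pi$. $p$ is bi-decomposable if both $p$ and $\pi\mapsto p(\pi^{-1})$ are $L$-decomposable. *)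

(* Defs.v *)
(* Ground set {1,...,n} is encoded as 'I_n (value i <-> i+1). *)
From HB Require Import structures.
From mathcomp Require Import all_boot all_order all_algebra all_fingroup.
Set Implicit Arguments. Unset Strict Implicit. Unset Printing Implicit Defensive.
Import Order.TTheory GRing.Theory Num.Theory.
Local Open Scope ring_scope.

(* pi{1:k} = {pi(1),...,pi(k)}; in 0-indexed form: images of positions i < k *)
Definition prefix_set (n : nat) (pi : 'S_n) (k : nat) : {set 'I_n} :=
  [set pi i | i : 'I_n & (i < k)%N].

Definition L_decomposable (R : realFieldType) (n : nat) (p : 'S_n -> R) : Prop :=
  exists (Lambda : 'I_n -> {set 'I_n} -> R) (c : R),
    (forall (x : 'I_n) (C : {set 'I_n}), x \notin C -> 0 <= Lambda x C) /\
    (forall pi : 'S_n,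
       p pi = c * \prod_(k < n) Lambda (pi k) (prefix_set pi k)).

Definition bi_decomposable (R : realFieldType) (n : nat) (p : 'S_n -> R) : Prop :=
  L_decomposable p /\ L_decomposable (fun pi => p pi^-1%g).

(* r_x(pi) = |{ j <= x : pi^-1(j) <= pi^-1(x) }| (invariant under the 0/1 shift) *)
Definition rank_ins (n : nat) (pi : 'S_n) (x : 'I_n) : nat :=
  #|[set j : 'I_n | (j <= x)%N && ((pi^-1)%g j <= (pi^-1)%g x)%N]|.

(* repeated insertion model: theta is 1-indexed, theta r x for 1 <= r <= x <= n;
   the element x : 'I_n stands for x.+1 *)
Definition rim (R : realFieldType) (n : nat) (theta : nat -> nat -> R) (pi : 'S_n) : R :=
  \prod_(x : 'I_n) theta (rank_ins pi x) x.+1.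

Definition rim_Lambda (R : realFieldType) (n : nat) (theta : nat -> nat -> R)
  (x : 'I_n) (C : {set 'I_n}) : R :=
  theta (#|C :&: [set y : 'I_n | (y <= x)%N]|).+1 x.+1.

(* Main.v *)
Require Import Defs.
From HB Require Import structures.
From mathcomp Require Import all_boot all_order all_algebra all_fingroup.
Import Order.TTheory GRing.Theory Num.Theory.
Local Open Scope ring_scope.

Lemma card_lt_set (n k : nat) : (k <= n)%N -> #|[set i : 'I_n | (i < k)%N]| = k.
Proof.
move=> kn.
have -> : [set i : 'I_n | (i < k)%N] = widen_ord kn @: [set: 'I_k].
  apply/setP=> i; rewrite inE; apply/idP/imsetP.
    move=> ik; exists (Ordinal ik); first by rewrite inE.
    by apply/val_inj.
  by case=> j _ ->; rewrite /= ltn_ord.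
rewrite card_imset ?cardsT ?card_ord //.
by move=> a b /(congr1 val) /= ab; apply/val_inj.
Qed.

Lemma in_prefix (n : nat) (pi : 'S_n) k (j : 'I_n) :
  (j \in prefix_set pi k) = ((pi^-1)%g j < k)%N.
Proof.
apply/imsetP/idP.
  by case=> i; rewrite inE => ik ->; rewrite permK.
by move=> h; exists ((pi^-1)%g j); rewrite ?inE ?permKV.
Qed.

Lemma keyA (n : nat) (pi : 'S_n) (k : 'I_n) :
  #|[set j : 'I_n | (j <= pi k)%N && ((pi^-1)%g j <= k)%N]| =
  (#|prefix_set pi k :&: [set y : 'I_n | (y <= pi k)%N]|).+1.
Proof.
have -> : [set j : 'I_n | (j <= pi k)%N && ((pi^-1)%g j <= k)%N] =
   pi k |: (prefix_set pi k :&: [set y : 'I_n | (y <= pi k)%N]).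
  apply/setP=> j; rewrite !inE in_prefix.
  case: (eqVneq j (pi k)) => [->|ne]; first by rewrite permK !leqnn.
  rewrite /= andbC; congr (_ && _).
  rewrite leq_eqVlt; case: eqP => //= e; case/eqP: ne.
  by rewrite -(permKV pi j); congr (pi _); apply/val_inj.
rewrite cardsU1 inE in_prefix permK ltnn /=.
by rewrite add1n.
Qed.

Lemma keyB (n : nat) (pi : 'S_n) (k : 'I_n) :
  #|[set j : 'I_n | (j <= k)%N && (pi j <= pi k)%N]| =
  (#|prefix_set pi k :&: [set y : 'I_n | (y <= pi k)%N]|).+1.
Proof.
rewrite -keyA -(@card_preimset _ pi [set j : 'I_n | (j <= pi k)%N && ((pi^-1)%g j <= k)%N] (@perm_inj _ pi)).
apply: eq_card => j; rewrite !inE permK.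
by rewrite andbC.
Qed.

Lemma card_prefix (n : nat) (pi : 'S_n) (k : 'I_n) : #|prefix_set pi k| = k.
Proof.
rewrite /prefix_set card_imset; last exact: perm_inj.
rewrite -{2}(@card_lt_set n k (ltnW (ltn_ord k))).
by apply: eq_card => i; rewrite !inE.
Qed.

Theorem mainTheorem14 (R : realFieldType) (n : nat) (theta : nat -> nat -> R)
  (htheta : forall x : nat, (1 <= x <= n)%N ->
     (forall r : nat, (1 <= r <= x)%N -> 0 <= theta r x) /\
     \sum_(1 <= r < x.+1) theta r x = 1) :
  bi_decomposable (rim theta : 'S_n -> R) /\
  (forall pi : 'S_n,
     rim theta pi =
     \prod_(k < n) rim_Lambda theta (pi k) (prefix_set pi k)).
Proof.
have main : forall pi : 'S_n, rim theta pi =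
     \prod_(k < n) rim_Lambda theta (pi k) (prefix_set pi k).
  move=> pi; rewrite /rim (reindex_inj (@perm_inj _ pi)) /=.
  apply: eq_bigr => k _; rewrite /rim_Lambda /rank_ins permK.
  by rewrite keyA.
split; last exact: main.
split.
  exists (rim_Lambda theta), 1; split; last by move=> pi; rewrite mul1r main.
  move=> x C xC; rewrite /rim_Lambda.
  have [h _] := htheta x.+1 (ltn_ord x).
  apply: h; rewrite /= ltnS.
  have sub : C :&: [set y : 'I_n | (y <= x)%N] \subset [set y : 'I_n | (y < x)%N].
    apply/subsetP=> y; rewrite !inE => /andP [yC yx].
    rewrite ltn_neqAle yx andbT; apply/negP=> /eqP e.
    by move/negP: xC; apply; have -> : x = y by apply/val_inj.
  apply: leq_trans (subset_leq_card sub) _.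
  by rewrite card_lt_set // ltnW.
exists (fun x C => theta (#|C :&: [set y : 'I_n | (y <= x)%N]|).+1 (#|C|).+1), 1.
split.
  move=> x C xC.
  have Cn : (#|C| < n)%N.
    have : C \subset [set~ x] by apply/subsetP=> y yC; rewrite !inE; apply/eqP=> e; move: xC; rewrite -e yC.
    move/subset_leq_card; rewrite cardsC1 card_ord => h.
    by apply: leq_ltn_trans h _; rewrite ltn_predL (leq_ltn_trans (leq0n x) (ltn_ord x)).
  have [h _] := htheta (#|C|).+1 Cn.
  apply: h; rewrite /= ltnS.
  exact: subset_leq_card (subsetIl _ _).
move=> pi; rewrite mul1r /rim.
apply: eq_bigr => k _; rewrite card_prefix /rank_ins invgK.
by rewrite keyB.
Qed.
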